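(* Let $(M,\le)$ be a finite ordered monoid, $G\subseteq M$ a generating set and $eval:G^*\to M$ the natural evaluation morphism. Suppose there are words $u,v,w_1,w_2\in G^*$ such that (i) $u=w_1w_2$; (ii) $v$ is a shuffle of $w_1$ and $w_2$; (iii) $eval(u)$ is idempotent; (iv) $eval(uvu)\not\le eval(u)$. Then $N^1(M)=\Omega(n)$.
   Context: $v$ is a shuffle of $w_1$ and $w_2$ if there exist $k\ge0$ and words $w_{1,1},\dots,w_{1,k},w_{2,1},\dots,w_{2,k}\in G^*$ (possibly empty) with $w_1=w_{1,1}\cdots w_{1,k}$, $w_2=w_{2,1}\cdots w_{2,k}$ and $v=w_{1,1}w_{2,1}w_{1,2}w_{2,2}\cdots w_{1,k}w_{2,k}$. An element $e$ is idempotent if $ee=e$. A finite ordered monoid is a finite monoid with a partial order such that $x\le y\Rightarrow zx\le zy$ and $xz\le yz$. Non-deterministic communication complexity: for $f:X\times Y\to\{0,1\}$, $N^1(f)$ is the minimum cost of a non-deterministic protocol for $f$; equivalently, up to an additive constant 2, $N^1(f)=\log_2 C^1(f)$, where $C^1(f)$ is the minimum number of rectangles $S\times T$ on which $f\equiv1$ whose union is $f^{-1}(1)$. An order ideal is a subset $I\subseteq M$ with $y\in I, x\le y\Rightarrow x\in I$. For an order ideal $I$, $N^1(M,I)(n)$ is $N^1$ of the function where Alice receives $m_1,m_3,\dots,m_{2n-1}\in M$, Bob receives $m_2,\dots,m_{2n}\in M$, with value $1$ iff $m_1\cdots m_{2n}\in I$; $N^1(M)(n)=\max_I N^1(M,I)(n)$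 over all order ideals. Asymptotics are as $n\to\infty$. *)

(* Defs.v *)
From mathcomp Require Import all_boot.
Set Implicit Arguments. Unset Strict Implicit. Unset Printing Implicit Defensive.

Definition is_monoid (M : Type) (mul : M -> M -> M) (one : M) : Prop :=
  [/\ associative mul, left_id one mul & right_id one mul].

Definition is_ordered_monoid (M : Type) (mul : M -> M -> M) (one : M)
    (le : rel M) : Prop :=
  [/\ is_monoid mul one,
      reflexive le, antisymmetric le, transitive le &
      forall x y z, le x y -> le (mul z x) (mul z y) /\ le (mul x z) (mul y z)].

Definition word_over (M : finType) (G : {set M}) (w : seq M) : bool :=
  all (fun g => g \in G) w.

Definition eval (M : Type) (mul : M -> M -> M) (one : M) (w : seq M) : M :=
  foldr mul one w.

Definition generates (M : finType) (mul : M -> M -> M) (one : M) (G : {set M}) : Prop :=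
  forall m : M, exists w, word_over G w /\ eval mul one w = m.

(* v is a shuffle of w1 and w2 (k = size s1 = size s2 blocks, possibly empty). *)
Definition shuffle (T : Type) (v w1 w2 : seq T) : Prop :=
  exists (s1 s2 : seq (seq T)),
    [/\ size s1 = size s2, w1 = flatten s1, w2 = flatten s2 &
        v = flatten [seq p.1 ++ p.2 | p <- zip s1 s2]].

Definition one_cover (X Y : finType) (f : X -> Y -> bool)
    (rs : {set ({set X} * {set Y})}) : bool :=
  [forall r in rs, forall x in r.1, forall y in r.2, f x y] &&
  [forall x, forall y, f x y ==> [exists r in rs, (x \in r.1) && (y \in r.2)]].

(* C^1(f): minimum size of a 1-cover.  The default value of the min is the
   size of the cover by singleton rectangles, which is itself a 1-cover,
   so this is exactly the minimum. *)
Definition C1 (X Y : finType) (f : X -> Y -> bool) : nat :=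
  \big[minn/#|[set xy : X * Y | f xy.1 xy.2]|]_(rs | one_cover f rs) #|rs|.

(* N^1(f) = log2 C^1(f) (up to the additive constant allowed by the paper). *)
Definition N1 (X Y : finType) (f : X -> Y -> bool) : nat := trunc_log 2 (C1 f).

Definition order_ideal (M : finType) (le : rel M) (I : {set M}) : bool :=
  [forall y in I, forall x, le x y ==> (x \in I)].

(* Alice holds a = (m1, m3, ..., m_{2n-1}), Bob holds b = (m2, ..., m_{2n});
   the product m1 m2 ... m_{2n}. *)
Definition interleaved_prod (M : finType) (mul : M -> M -> M) (one : M) (n : nat)
    (a b : {ffun 'I_n -> M}) : M :=
  foldr (fun i acc => mul (mul (a i) (b i)) acc) one (enum 'I_n).

Definition N1MI (M : finType) (mul : M -> M -> M) (one : M) (I : {set M})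
    (n : nat) : nat :=
  N1 (fun a b : {ffun 'I_n -> M} => interleaved_prod mul one a b \in I).

Definition N1M (M : finType) (mul : M -> M -> M) (one : M) (le : rel M)
    (n : nat) : nat :=
  \max_(I : {set M} | order_ideal le I) N1MI mul one I n.

(* Main.v *)
Require Import Defs.
From mathcomp Require Import all_boot.
From Stdlib Require Import Lia.
Set Implicit Arguments. Unset Strict Implicit. Unset Printing Implicit Defensive.


Fixpoint bits (m : nat) : seq (seq bool) :=
  if m is m'.+1 then [seq false :: s | s <- bits m'] ++ [seq true :: s | s <- bits m']
  else [:: [::]].

Fixpoint inter (s t : seq bool) : nat :=
  match s, t with a :: s', b :: t' => (a && b) + inter s' t' | _, _ => 0 end.

Lemma mem_bits m s : (s \in bits m) = (size s == m).
Proof.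
elim: m s => [|m IH] [|b s] //=.
- rewrite mem_cat; apply/negbTE; rewrite negb_or; apply/andP; split;
   apply/mapP => -[x _] //.
- have inj (c : bool) : injective (cons c) by move=> x y [].
  rewrite mem_cat eqSS -IH; case: b.
  + rewrite (mem_map (inj true)).
    apply/orP/idP => [[]|]; last by right.
      by move=> /mapP [x _].
    done.
  + rewrite (mem_map (inj false)).
    apply/orP/idP => [[]|]; [done| |by left].
    by move=> /mapP [x _].
Qed.

Lemma leq_sum_seq (I : eqType) (r : seq I) (F G : I -> nat) :
  (forall i, i \in r -> F i <= G i) -> \sum_(i <- r) F i <= \sum_(i <- r) G i.
Proof. by move=> h; rewrite big_seq [X in _ <= X]big_seq; apply: leq_sum. Qed.

Definition Dsum m (A B : pred (seq bool)) : nat :=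
  \sum_(s <- bits m) \sum_(t <- bits m) (A s && B t && (inter s t == 0)).

Lemma KW m (A B : pred (seq bool)) :
  (forall s t, size s = m -> size t = m -> A s -> B t -> inter s t != 1) ->
  Dsum m A B <= 2 ^ m.
Proof.
elim: m A B => [|m IH] A B H.
  rewrite /Dsum /= !big_cons !big_nil /=.
  by case: (A _); case: (B _).
set A0 := fun s => A (false :: s). set A1 := fun s => A (true :: s).
set B0 := fun s => B (false :: s). set B1 := fun s => B (true :: s).
have H1 : Dsum m (fun s => A0 s || A1 s) B0 <= 2 ^ m.
  apply: IH => s t hs ht /orP [] ha hb.
    by have := H (false :: s) (false :: t); rewrite /= hs ht add0n; apply.
  by have := H (true :: s) (false :: t); rewrite /= hs ht add0n; apply.
have H2 : Dsum m A0 (fun s => B0 s || B1 s) <= 2 ^ m.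
  apply: IH => s t hs ht ha /orP [] hb.
    by have := H (false :: s) (false :: t); rewrite /= hs ht add0n; apply.
  by have := H (false :: s) (true :: t); rewrite /= hs ht add0n; apply.
rewrite expnS mul2n -addnn; apply: leq_trans (leq_add H1 H2).
rewrite /Dsum /= big_cat /= !big_map -big_split /=.
rewrite -big_split /=; apply: leq_sum_seq => s hs.
rewrite !big_cat /= !big_map -!big_split /=; apply: leq_sum_seq => t ht.
have := H (true :: s) (true :: t).
rewrite /A0 /A1 /B0 /B1 /= add0n add1n.
move: hs ht; rewrite !mem_bits => /eqP -> /eqP -> /(_ erefl erefl).
rewrite eqSS.
case: (A (true :: s)); case: (A (false :: s)); case: (B (true :: t));
  case: (B (false :: t)); case: (inter s t == 0) => //= /(_ isT isT) //.
Qed.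

Lemma Dsum_total m : Dsum m predT predT = 3 ^ m.
Proof.
elim: m => [|m IH]; first by rewrite /Dsum /= !big_cons !big_nil.
rewrite /Dsum /= big_cat /= !big_map.
set X := fun s => \sum_(t <- bits m) (true && true && (inter s t == 0)).
have E0 : forall s, \sum_(t <- [seq false :: s | s <- bits m] ++
                 [seq true :: s | s <- bits m]) (true && true && (inter (false :: s) t == 0))
   = X s + X s.
  move=> s; rewrite big_cat /= !big_map; congr (_ + _); apply: eq_bigr => t _;
    by rewrite /= ?andbF ?andbT add0n.
have E1 : forall s, \sum_(t <- [seq false :: s | s <- bits m] ++
                 [seq true :: s | s <- bits m]) (true && true && (inter (true :: s) t == 0))
   = X s.
  move=> s; rewrite big_cat /= !big_map [X in _ + X]big1 ?addn0.
    by apply: eq_bigr => t _; rewrite /= add0n.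
  by move=> t _; case: t.

rewrite (eq_bigr _ (fun s _ => E0 s)) (eq_bigr _ (fun s _ => E1 s)) big_split /=.
have -> : \sum_(s <- bits m) X s = 3 ^ m by rewrite -IH.
by rewrite expnS !mulSn mul0n addn0 addnA.
Qed.

Lemma has_le (T : Type) (R : seq T) (P : pred T) (F : T -> nat) :
  (forall r, P r -> 0 < F r) -> has P R -> 0 < \sum_(r <- R) F r.
Proof.
move=> hF; elim: R => //= x R IH /orP [/hF h|/IH h]; rewrite big_cons.
  by apply: leq_trans h (leq_addr _ _).
by apply: leq_trans h (leq_addl _ _).
Qed.

Lemma cover_bound m (I : eqType) (R : seq I) (A B : I -> pred (seq bool)) :
  (forall r, r \in R -> forall s t, size s = m -> size t = m ->
       A r s -> B r t -> inter s t != 1) ->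
  (forall s t, size s = m -> size t = m -> inter s t = 0 ->
       has (fun r => A r s && B r t) R) ->
  3 ^ m <= size R * 2 ^ m.
Proof.
move=> Hr Hc; rewrite -Dsum_total.
apply: (@leq_trans (\sum_(r <- R) Dsum m (A r) (B r))).
  rewrite /Dsum [X in _ <= X]exchange_big /=; apply: leq_sum_seq => s hs.
  rewrite [X in _ <= X]exchange_big /=; apply: leq_sum_seq => t ht.
  case E: (inter s t == 0) => //=.
  move: hs ht; rewrite !mem_bits => /eqP hs /eqP ht.
  by apply: has_le (Hc s t hs ht (eqP E)) => r /andP [-> ->].
rewrite -sum1_size big_distrl /=; apply: leq_sum_seq => r hr.
by rewrite mul1n; apply: KW; apply: Hr.
Qed.


Lemma eval_cat (M : Type) (mul : M -> M -> M) (one : M) :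
  associative mul -> left_id one mul ->
  forall s1 s2, eval mul one (s1 ++ s2) = mul (eval mul one s1) (eval mul one s2).
Proof.
move=> mA m1; elim=> [|a s1 IH] s2 /=; first by rewrite m1.
by rewrite /eval /= -/(eval mul one _) IH mA.
Qed.

Lemma eval_flatten (M : Type) (mul : M -> M -> M) (one : M) :
  associative mul -> left_id one mul ->
  forall L, eval mul one (flatten L) = eval mul one (map (eval mul one) L).
Proof.
move=> mA m1; elim=> [|a L IH] //=.
by rewrite eval_cat // IH.
Qed.

Definition pm (M : Type) (mul : M -> M -> M) (p : M * M) := mul p.1 p.2.

Lemma zip_nseq_r (M : Type) (mul : M -> M -> M) (one : M) :
  right_id one mul -> forall l,
  map (pm mul) (zip l (nseq (size l) one)) = l.
Proof. by move=> m2; elim=> //= a l ->; rewrite /pm /= m2. Qed.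

Lemma zip_nseq_l (M : Type) (mul : M -> M -> M) (one : M) :
  left_id one mul -> forall l,
  map (pm mul) (zip (nseq (size l) one) l) = l.
Proof. by move=> m1; elim=> //= a l ->; rewrite /pm /= m1. Qed.

Lemma eval_nseq (M : Type) (mul : M -> M -> M) (one : M) :
  left_id one mul -> forall k, eval mul one (nseq k one) = one.
Proof. by move=> m1; elim=> //= k; rewrite /eval /= => ->; rewrite m1. Qed.

Definition LA (M : Type) (mul : M -> M -> M) (one e x : M) (al : seq M) (b : bool) :=
  (if b then e else mul e x) :: (if b then al else nseq (size al) one) ++ [:: one].
Definition LB (M : Type) (mul : M -> M -> M) (one e y : M) (bl : seq M) (b : bool) :=
  one :: (if b then bl else nseq (size bl) one) ++ [:: if b then e else mul y e].

Lemma blockval (M : Type) (mul : M -> M -> M) (one : M) :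
  associative mul -> left_id one mul -> right_id one mul ->
  forall (al bl : seq M) (e x y : M) (a b : bool),
  size al = size bl ->
  x = eval mul one al -> y = eval mul one bl -> e = mul x y -> mul e e = e ->
  eval mul one (map (pm mul) (zip (LA mul one e x al a) (LB mul one e y bl b))) =
  if a && b then mul (mul e (eval mul one (map (pm mul) (zip al bl)))) e else e.
Proof.
move=> mA m1 m2 al bl e x y a b hs hx hy he hee.
have hmid : forall l1 l2 (c d u w : M), size l1 = size l2 ->
  eval mul one (map (pm mul) (zip (c :: l1 ++ [:: u]) (d :: l2 ++ [:: w]))) =
  mul (mul c d) (mul (eval mul one (map (pm mul) (zip l1 l2))) (mul u w)).
  move=> l1 l2 c d u w h12.
  rewrite /= zip_cat // map_cat eval_cat // /eval /= -/(eval mul one _).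
  by rewrite /pm /= m2.
have exy : mul x (mul y e) = e by rewrite mA -he hee.
rewrite /LA /LB; case: a; case: b; rewrite hmid ?size_nseq //=.
by rewrite m1 m2 mA.
by rewrite -hs zip_nseq_r // m2 m1 -hx exy.
by rewrite hs zip_nseq_l // m1 -hy m2 -mA exy.
rewrite hs -{2}(size_nseq (size bl) one) zip_nseq_r // eval_nseq // m1 m2.
  by rewrite !m1 -mA exy hee.
Qed.


Lemma map_nth_iota0 (M : Type) (f : M -> M -> M) (d : M) :
  forall (l1 l2 : seq M) L, size l1 = L -> size l2 = L ->
  [seq f (nth d l1 r) (nth d l2 r) | r <- iota 0 L] = [seq f p.1 p.2 | p <- zip l1 l2].
Proof.
elim=> [|a l1 IH] [|b l2] [|L] //= [h1] [h2].
rewrite -(addn0 1) iotaDl -map_comp /=; congr (_ :: _).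
by rewrite -(IH l2 L h1 h2).
Qed.

Lemma map_nth_iota0b (T : Type) (g : bool -> bool -> T) :
  forall (s t : seq bool) m, size s = m -> size t = m ->
  [seq g (nth false s j) (nth false t j) | j <- iota 0 m] = [seq g p.1 p.2 | p <- zip s t].
Proof.
elim=> [|a s IH] [|b t] [|m] //= [h1] [h2].
rewrite -(addn0 1) iotaDl -map_comp /=; congr (_ :: _).
by rewrite -(IH t m h1 h2).
Qed.

Definition Aval (M : Type) (mul : M -> M -> M) (one e x : M) (al : seq M)
  (m L : nat) (s : seq bool) (i : nat) : M :=
  if i %/ L < m then nth one (LA mul one e x al (nth false s (i %/ L))) (i %% L) else one.
Definition Bval (M : Type) (mul : M -> M -> M) (one e y : M) (bl : seq M)
  (m L : nat) (s : seq bool) (i : nat) : M :=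
  if i %/ L < m then nth one (LB mul one e y bl (nth false s (i %/ L))) (i %% L) else one.

Lemma full_prod (M : Type) (mul : M -> M -> M) (one : M) :
  associative mul -> left_id one mul -> right_id one mul ->
  forall (al bl : seq M) (e x y : M) (n : nat) (s t : seq bool),
  size al = size bl ->
  eval mul one [seq mul (Aval mul one e x al (n %/ (size al).+2) (size al).+2 s i)
                        (Bval mul one e y bl (n %/ (size al).+2) (size al).+2 t i)
               | i <- iota 0 n] =
  eval mul one [seq eval mul one (map (pm mul) (zip (LA mul one e x al (nth false s j))
                                                  (LB mul one e y bl (nth false t j))))
               | j <- iota 0 (n %/ (size al).+2)].
Proof.
move=> mA m1 m2 al bl e x y n s t hs.
set L := (size al).+2. set m := n %/ L.
have L0 : 0 < L by [].
set c := fun i => _.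
have blk : forall j, j < m -> [seq c i | i <- iota (j * L) L] =
   map (pm mul) (zip (LA mul one e x al (nth false s j)) (LB mul one e y bl (nth false t j))).
  move=> j hj; rewrite -(addn0 (j * L)) iotaDl -map_comp.
  rewrite -(map_nth_iota0 mul one (l1 := LA mul one e x al (nth false s j))
              (l2 := LB mul one e y bl (nth false t j)) (L := L)); first last.
  by case: (nth false t j); rewrite /LB /= size_cat ?size_nseq /= addn1 -?hs.
  by case: (nth false s j); rewrite /LA /= size_cat ?size_nseq /= addn1.
  apply/eq_in_map => r; rewrite mem_iota add0n => hr /=.
  rewrite /c /Aval /Bval divnMDl // modnMDl divn_small // modn_small // addn0 hj.
  done.
have blocks : forall cnt j0, j0 + cnt <= m ->
   eval mul one [seq c i | i <- iota (j0 * L) (cnt * L)] =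
   eval mul one [seq eval mul one (map (pm mul) (zip (LA mul one e x al (nth false s j))
                                                  (LB mul one e y bl (nth false t j))))
               | j <- iota j0 cnt].
  elim=> [|cnt IH] j0 hj; first by rewrite mul0n.
  rewrite mulSn iotaD map_cat eval_cat // blk; last by apply: leq_trans hj; rewrite addnS ltnS leq_addr.
  rewrite (_ : j0 * L + L = j0.+1 * L); last by rewrite mulSn addnC.
  by rewrite IH // addSnnS.
rewrite {1}(divn_eq n L) -/m iotaD map_cat eval_cat // add0n.
rewrite -(add0n m) -blocks ?add0n // mul0n.
have -> : eval mul one [seq c i | i <- iota (m * L) (n %% L)] = one.
  rewrite (_ : [seq c i | i <- _] = map (fun=> one) (iota (m * L) (n %% L))).
    2: apply/eq_in_map.
    by elim: (iota _ _) => //= a l; rewrite /eval /= => ->; rewrite m1.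
  move=> i; rewrite mem_iota => /andP [hi _].
  rewrite /c /Aval /Bval.
  have -> : (i %/ L < m) = false.
    by apply/negbTE; rewrite -leqNgt leq_divRL.
  by rewrite m1.
by rewrite m2.
Qed.


Lemma eval_blocks (M : Type) (mul : M -> M -> M) (one : M) (e q : M) :
  right_id one mul -> mul e e = e -> mul e q = q -> mul q e = q ->
  forall s t, size s = size t ->
  (inter s t = 0 -> 0 < size s ->
     eval mul one [seq (if p.1 && p.2 then q else e) | p <- zip s t] = e) /\
  (inter s t = 1 ->
     eval mul one [seq (if p.1 && p.2 then q else e) | p <- zip s t] = q).
Proof.
move=> m2 hee heq hqe.
elim=> [|a s IH] [|b t] //=.
move=> [hs].
have [IH0 IH1] := IH t hs.
have base : inter s t = 0 ->
   eval mul one [seq (if p.1 && p.2 then q else e) | p <- zip s t] = one \/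
   eval mul one [seq (if p.1 && p.2 then q else e) | p <- zip s t] = e.
  case: s hs IH0 {IH IH1} => [|a' s'] hs IH0 h0.
    by case: t hs IH0 h0 => // _ _ _; left.
  by right; apply: IH0.
case: (a && b); rewrite ?add0n ?add1n; split => //.
- by move=> [] /base [] ->; rewrite ?m2.
- by move=> /base [] -> _; rewrite ?m2.
- by move=> /IH1 ->.
Qed.



Lemma zip_map2 (A B C D : Type) (f : A -> C) (g : B -> D) :
  forall (a : seq A) (b : seq B),
  zip (map f a) (map g b) = [seq (f p.1, g p.2) | p <- zip a b].
Proof. by elim=> [|x a IH] [|y b] //=; rewrite IH. Qed.

Lemma C1_lower (X Y : finType) (f : X -> Y -> bool) (P : nat -> Prop) :
  (forall a b, P a -> a <= b -> P b) ->
  (forall a b, P a -> P b -> P (minn a b)) ->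
  (forall rs, one_cover f rs -> P #|rs|) ->
  P (C1 f).
Proof.
move=> Pmono Pmin Pc; rewrite /C1.
apply: (big_ind (fun v => P v)); [|exact: Pmin|by move=> rs /Pc].
pose rs0 := [set (([set xy.1] : {set X}), ([set xy.2] : {set Y})) | xy in [set xy : X * Y | f xy.1 xy.2]].
apply: (Pmono #|rs0|); last exact: leq_imset_card.
apply: Pc; apply/andP; split.
  apply/forallP => r; apply/implyP => /imsetP [[a b]]; rewrite inE /= => hab ->.
  by apply/forallP => x; apply/implyP; rewrite /= inE => /eqP ->;
     apply/forallP => y; apply/implyP; rewrite inE => /eqP ->.
apply/forallP => x; apply/forallP => y; apply/implyP => hxy.
apply/existsP; exists ([set x], [set y]); rewrite /= !inE !eqxx andbT.
by rewrite andbT; apply/imsetP; exists (x, y); rewrite // inE.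
Qed.


Theorem mainTheorem9 (M : finType) (mul : M -> M -> M) (one : M) (le : rel M)
    (G : {set M}) (u v w1 w2 : seq M) :
  is_ordered_monoid mul one le ->
  generates mul one G ->
  word_over G u -> word_over G v -> word_over G w1 -> word_over G w2 ->
  u = w1 ++ w2 ->
  shuffle v w1 w2 ->
  mul (eval mul one u) (eval mul one u) = eval mul one u ->
  ~~ le (eval mul one (u ++ v ++ u)) (eval mul one u) ->
  exists (k n0 : nat), 0 < k /\ forall n, n0 <= n -> n <= k * N1M mul one le n.
Proof.
move=> [[mA m1 m2] lerefl leanti letrans lecomp] _ _ _ _ _ hu
  [s1 [s2 [hsz hw1 hw2 hv]]] hidem hnle.
set e := eval mul one u.
set al := map (eval mul one) s1. set bl := map (eval mul one) s2.
set x := eval mul one al. set y := eval mul one bl.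
have hx : eval mul one w1 = x by rewrite hw1 eval_flatten.
have hy : eval mul one w2 = y by rewrite hw2 eval_flatten.
have he : e = mul x y by rewrite /e hu eval_cat // hx hy.
set P := eval mul one (map (pm mul) (zip al bl)).
have hP : eval mul one v = P.
  rewrite hv eval_flatten // -map_comp /P zip_map2 -map_comp.
  by congr (eval mul one _); apply: eq_map => -[a b] /=; rewrite eval_cat.
set q := mul (mul e P) e.
have hq : ~~ le q e.
  by move: hnle; rewrite !eval_cat // hP -/e /q mA.
have heq : mul e q = q by rewrite /q !mA hidem.
have hqe : mul q e = q by rewrite /q -mA hidem.
have hsab : size al = size bl by rewrite !size_map.
set L := (size al).+2.
exists (4 * L), (3 * L); split => // n hn.
set m := n %/ L.
have hm3 : 3 <= m by rewrite /m leq_divRL.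
pose I := [set z | le z e].
have hI : order_ideal le I.
  apply/forall_inP => z; rewrite inE => hz; apply/forallP => z'; apply/implyP => h.
  by rewrite inE; exact: letrans h hz.
pose phi (s : seq bool) := [ffun i : 'I_n => Aval mul one e x al m L s i].
pose psi (t : seq bool) := [ffun i : 'I_n => Bval mul one e y bl m L t i].
have hprod : forall s t, size s = m -> size t = m ->
   interleaved_prod mul one (phi s) (psi t) =
   eval mul one [seq (if p.1 && p.2 then q else e) | p <- zip s t].
  move=> s t hs ht; rewrite /interleaved_prod.
  rewrite -(foldr_map (fun i => mul (phi s i) (psi t i)) mul).
  rewrite (_ : [seq mul (phi s i) (psi t i) | i <- enum 'I_n] =
     [seq mul (Aval mul one e x al m L s i) (Bval mul one e y bl m L t i) | i <- iota 0 n]);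
    last by rewrite -val_enum_ord -map_comp; apply: eq_map => i; rewrite /= !ffunE.
  rewrite -/(eval mul one _) (full_prod mA m1 m2 e x y n s t hsab) -/L -/m.
  rewrite (map_nth_iota0b (fun a b => eval mul one (map (pm mul)
        (zip (LA mul one e x al a) (LB mul one e y bl b)))) hs ht).
  congr (eval mul one _); apply: eq_map => -[a b].
  by rewrite (@blockval _ mul one mA m1 m2 al bl e x y a b hsab erefl erefl he hidem).
have EB := @eval_blocks _ mul one e q m2 hidem heq hqe.
pose f := fun a b : {ffun 'I_n -> M} => interleaved_prod mul one a b \in I.
have key : forall rs, one_cover f rs -> 3 ^ m <= #|rs| * 2 ^ m.
  move=> rs /andP [/forall_inP H1 /forallP H2].
  rewrite cardE.
  apply: (cover_bound (R := enum rs) (A := fun r s => phi s \in r.1)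
                      (B := fun r t => psi t \in r.2)).
    move=> r; rewrite mem_enum => hr s t hs ht ha hb.
    move: (H1 r hr) => /forall_inP /(_ _ ha) /forall_inP /(_ _ hb).
    rewrite /f inE hprod // => hle; apply/eqP => h1.
    have hs' : size s = size t by rewrite hs ht.
    by move: hle; rewrite ((EB s t hs').2 h1) (negbTE hq).
  move=> s t hs ht h0.
  have hs' : size s = size t by rewrite hs ht.
  have hf : f (phi s) (psi t).
    rewrite /f inE hprod // ((EB s t hs').1 h0) ?lerefl // hs.
    by apply: leq_trans hm3.
  move: (H2 (phi s)) => /forallP /(_ (psi t)) /implyP /(_ hf) /existsP [r /andP [hr hrr]].
  by apply/hasP; exists r; rewrite ?mem_enum.
have hC : 3 ^ m <= C1 f * 2 ^ m.
  apply: (C1_lower (P := fun c => 3 ^ m <= c * 2 ^ m)) => //.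
    by move=> a b ha hab; apply: leq_trans ha _; rewrite leq_mul2r hab orbT.
  by move=> a b ha hb; rewrite /minn; case: ltnP.
set c := C1 f.
set t := trunc_log 2 c.
have h2 : 2 ^ m <= c ^ 2.
  have h9 := leq_mul hC hC.
  have h8 : 2 ^ m * (2 ^ m * 2 ^ m) <= 3 ^ m * 3 ^ m.
    by rewrite -!expnMn leq_exp2r // (leq_trans _ hm3).
  rewrite -(@leq_pmul2r (2 ^ m * 2 ^ m)) ?muln_gt0 ?expn_gt0 //.
  apply: leq_trans h8 (leq_trans h9 _).
  by rewrite mulnACA -expnMn (mulnC c) -!mulnA.
have hlt : m < t.+1 * 2.
  have hc := trunc_log_ltn c (isT : 1 < 2).
  rewrite -(@ltn_exp2l 2) //; apply: leq_ltn_trans h2 _.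
  by rewrite expnM ltn_sqr.
have hN : t <= N1M mul one le n.
  by apply: leq_trans (leq_bigmax_cond I hI).
have hnL : n < m.+1 * L by apply: ltn_ceil.
have h4 : m.+1 <= 4 * t.
  move: hlt hm3; rewrite mulnC.
  move=> /ltP hlt /leP hm3; apply/leP.
  rewrite -multE in hlt *. lia.
apply: ltnW; apply: leq_trans hnL _.
rewrite -mulnA mulnC; apply: leq_trans (leq_mul (leqnn _) h4) _.
by rewrite mulnCA leq_mul2l leq_mul2l hN !orbT.
Qed.
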